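(* Let $n\ge2$ and let $P\in\mathrm{Mat}(n^2,\mathbb{C})$ be an orthogonal projection ($P^*=P$, $P^2=P$) of rank $r$. Put $P_1=P\otimes I_n$, $P_2=I_n\otimes P$, $t_m=\operatorname{tr}_3\big((P_1P_2)^m\big)$ and $F[P]=(rn-t_1)(t_2-t_3)-(t_1-t_2)^2$. (a) If there is a real number $Q>0$ such that $Q^2(P_1P_2P_1-P_2P_1P_2)=P_1-P_2$, then $F[P]=0$. (b) If $F[P]=0$ and $P_1P_2\neq P_2P_1$, then $Q^2(P_1P_2P_1-P_2P_1P_2)=P_1-P_2$ holds with $Q>0$ given by $$Q^2=\frac{rn-t_1}{t_1-t_2}.$$
   Context: $I_n$ is the $n\times n$ identity matrix, $\otimes$ is the Kronecker product, $P^*$ is the conjugate transpose, and $\operatorname{tr}_3$ is the matrix trace on $\mathrm{Mat}(n^3,\mathbb{C})$. *)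

(* Defs.v *)
From HB Require Import structures.
From mathcomp Require Import all_boot all_order all_algebra.
From mathcomp Require Import complex mxtens.
From mathcomp Require Import reals.
Set Implicit Arguments. Unset Strict Implicit. Unset Printing Implicit Defensive.
Import Order.TTheory GRing.Theory Num.Theory.
Local Open Scope ring_scope.

Definition adjmx (R : realType) m n (A : 'M[R[i]]_(m, n)) : 'M[R[i]]_(n, m) :=
  (map_mx (@conjc R) A)^T.

Definition P1 (R : realType) (n : nat) (P : 'M[R[i]]_(n * n)) : 'M[R[i]]_(n * n * n) :=
  P *t (1%:M : 'M[R[i]]_n).

(* P_2 = I_n ⊗ P, a matrix of size n (n^2) = n^3, reindexed by the
   associativity n*(n*n) = (n*n)*n (this does not change the numeric index). *)
Definition P2 (R : realType) (n : nat) (P : 'M[R[i]]_(n * n)) : 'M[R[i]]_(n * n * n) :=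
  castmx (mulnA n n n, mulnA n n n) ((1%:M : 'M[R[i]]_n) *t P).

Definition tm (R : realType) (n : nat) (P : 'M[R[i]]_(n * n)) (m : nat) : R[i] :=
  \tr (iter m (fun X => X *m (P1 P *m P2 P)) 1%:M).

Definition FP (R : realType) (n : nat) (P : 'M[R[i]]_(n * n)) : R[i] :=
  ((\rank P * n)%:R - tm P 1) * (tm P 2 - tm P 3) - (tm P 1 - tm P 2) ^+ 2.

(* Main.v *)
Require Import Defs.
From HB Require Import structures.
From mathcomp Require Import all_boot all_order all_algebra.
From mathcomp Require Import complex mxtens.
From mathcomp Require Import reals.
From mathcomp Require Import ring.
Set Implicit Arguments. Unset Strict Implicit. Unset Printing Implicit Defensive.
Import Order.TTheory GRing.Theory Num.Theory.
Local Open Scope ring_scope.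

Section Helpers.
Variable R : realType.
Local Notation C := (R[i]).

Lemma adjmxM m n p (X : 'M[C]_(m, n)) (Y : 'M[C]_(n, p)) :
  adjmx (X *m Y) = adjmx Y *m adjmx X.
Proof. by rewrite /adjmx map_mxM trmx_mul. Qed.

Lemma adjmxD m n (X Y : 'M[C]_(m, n)) : adjmx (X + Y) = adjmx X + adjmx Y.
Proof. by rewrite /adjmx map_mxD raddfD. Qed.

Lemma adjmxB m n (X Y : 'M[C]_(m, n)) : adjmx (X - Y) = adjmx X - adjmx Y.
Proof. by rewrite /adjmx map_mxB raddfB. Qed.

Lemma adjmxZ m n (c : R) (X : 'M[C]_(m, n)) : adjmx (c%:C%C *: X) = c%:C%C *: adjmx X.
Proof. apply/matrixP => i j; rewrite !mxE rmorphM; congr (_ * _); exact: conjc_real. Qed.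

Lemma adjmx1 m : adjmx (1%:M : 'M[C]_m) = 1%:M.
Proof. by rewrite /adjmx map_mx1 trmx1. Qed.

Lemma adjmx_tens m n p q (X : 'M[C]_(m, n)) (Y : 'M[C]_(p, q)) :
  adjmx (X *t Y) = adjmx X *t adjmx Y.
Proof. by rewrite /adjmx map_mxT trmx_tens. Qed.

Lemma adjmx_cast m m' (e : m = m') (X : 'M[C]_m) :
  adjmx (castmx (e, e) X) = castmx (e, e) (adjmx X).
Proof. by case: m' / e; rewrite !castmx_id. Qed.

Lemma castmx_mulmx m m' (e : m = m') (X Y : 'M[C]_m) :
  castmx (e, e) X *m castmx (e, e) Y = castmx (e, e) (X *m Y).
Proof. by case: m' / e; rewrite !castmx_id. Qed.

Lemma tr_cast m m' (e : m = m') (X : 'M[C]_m) : \tr (castmx (e, e) X) = \tr X.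
Proof. by case: m' / e; rewrite !castmx_id. Qed.

Lemma tr_tens m p (X : 'M[C]_m) (Y : 'M[C]_p) : \tr (X *t Y) = \tr X * \tr Y.
Proof. by rewrite /mxtrace mulr_sum; apply: eq_bigr => k _; rewrite mxE. Qed.

Lemma tr_idem m (P : 'M[C]_m) : P *m P = P -> \tr P = (\rank P)%:R.
Proof.
move=> PP.
move: (col_base P) (row_base P) (mulmx_base P) (col_base_full P) (row_base_free P) => cb rb hb cf rf.
have E : rb *m cb = 1%:M.
  apply: (row_free_inj rf); rewrite mul1mx.
  apply: (row_full_inj cf).
  by rewrite !mulmxA hb -mulmxA hb PP.
have -> : \tr P = \tr (cb *m rb) by rewrite hb.
by rewrite mxtrace_mulC E mxtrace1.
Qed.

Lemma tr_adj m p (W : 'M[C]_(m, p)) :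
  \tr (W *m adjmx W) = \sum_i \sum_j W i j * (W i j)^*%C.
Proof.
rewrite /mxtrace; apply: eq_bigr => i _; rewrite mxE.
by apply: eq_bigr => j _; rewrite /adjmx !mxE.
Qed.

Lemma tr_adj_ge0 m p (W : 'M[C]_(m, p)) : 0 <= \tr (W *m adjmx W).
Proof.
rewrite tr_adj; apply: sumr_ge0 => i _; apply: sumr_ge0 => j _; exact: mulcJ_ge0.
Qed.

Lemma tr_adj_eq0 m p (W : 'M[C]_(m, p)) : \tr (W *m adjmx W) = 0 -> W = 0.
Proof.
rewrite tr_adj => /psumr_eq0P H; apply/matrixP => i j; rewrite mxE.
have /psumr_eq0P H2 := H (fun i _ => sumr_ge0 _ (fun j _ => mulcJ_ge0 _)) i isT.
have /eqP := H2 (fun j _ => mulcJ_ge0 _) j isT.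
by rewrite mulf_eq0 conjc_eq0 orbb => /eqP.
Qed.


Lemma zl (V : zmodType) (a b x y : V) : a - x = b - y -> x - y = a - b.
Proof.
move=> h; rewrite -[a](subrK x) h.
by rewrite addrAC [b - y]addrC addrK addrC.
Qed.

Section Key.
Variables (N : nat) (A B : 'M[C]_N).
Hypotheses (hA : adjmx A = A) (hB : adjmx B = B) (AA : A *m A = A) (BB : B *m B = B).

Lemma key (s : R) (t1 t2 t3 : C) :
  \tr (A *m B) = t1 -> \tr (A *m B *m (A *m B)) = t2 ->
  \tr (A *m B *m (A *m B) *m (A *m B)) = t3 ->
  (\tr A - t1) * (t2 - t3) = (t1 - t2) ^+ 2 ->
  s%:C%C * (t1 - t2) = \tr A - t1 -> t1 - t2 != 0 ->
  A - s%:C%C *: (A *m B *m A) = B *m (A - s%:C%C *: (A *m B *m A)).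
Proof.
move=> E1 E2 E3 hF hq hd.
set q := s%:C%C; set M := A *m B *m A; set G := A - q *: M.
have AM : A *m M = M by rewrite /M !mulmxA AA.
have MA : M *m A = M by rewrite /M -mulmxA AA.
have MM : M *m M = A *m B *m A *m B *m A.
  by rewrite /M !mulmxA -[A *m B *m A *m A]mulmxA AA.
have hM : adjmx M = M by rewrite /M !adjmxM hA hB mulmxA.
have hG : adjmx G = G by rewrite /G adjmxB adjmxZ hA hM.
have GG : G *m G = A - q *: M - q *: (M - q *: (M *m M)).
  by rewrite /G !mulmxBl !mulmxBr -?scalemxAl -?scalemxAr AA AM MA scalerBr.
have trM : \tr M = t1 by rewrite /M mxtrace_mulC mulmxA AA E1.
have trMM : \tr (M *m M) = t2.
  by rewrite MM mxtrace_mulC -E2 !mulmxA AA.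
have trBA : \tr (B *m A) = t1 by rewrite mxtrace_mulC E1.
have trBM : \tr (B *m M) = t2 by rewrite mxtrace_mulC /M -E2 !mulmxA.
have trBMM : \tr (B *m (M *m M)) = t3 by rewrite MM mxtrace_mulC -E3 !mulmxA.
have trGG : \tr (G *m G) = \tr A - q * t1 - q * (t1 - q * t2).
  by rewrite GG !raddfB /= !mxtraceZ trM trMM; ring.
have trBGG : \tr (B *m (G *m G)) = t1 - q * t2 - q * (t2 - q * t3).
  rewrite GG !mulmxBr -!scalemxAr mulmxBr -scalemxAr !raddfB /= !mxtraceZ trBA trBM trBMM; ring.
clearbody G.
have hW : adjmx (G - B *m G) = G - G *m B by rewrite adjmxB adjmxM hG hB.
have trW : \tr ((G - B *m G) *m adjmx (G - B *m G)) = \tr (G *m G) - \tr (B *m (G *m G)).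
  rewrite hW !mulmxBl !mulmxBr !raddfB /=.
  have e1 : \tr (G *m (G *m B)) = \tr (B *m (G *m G)) by rewrite mulmxA mxtrace_mulC.
  have e2 : \tr (B *m G *m (G *m B)) = \tr (B *m (G *m G)).
    by rewrite mxtrace_mulC -mulmxA (mulmxA B B G) BB mxtrace_mulC -mulmxA.
  have e3 : \tr (B *m G *m G) = \tr (B *m (G *m G)) by rewrite mulmxA.
  rewrite e1 e2 e3; ring.
have qe : q * (t2 - t3) = t1 - t2.
  apply: (mulfI hd); have := hF; rewrite -hq => h.
  by rewrite mulrA [(t1 - t2) * q]mulrC h expr2.
have W0 : G - B *m G = 0.
  apply: tr_adj_eq0; rewrite trW trGG trBGG.
  transitivity ((\tr A - t1) - q * (t1 - t2) - q * (t1 - t2) + q * (q * (t2 - t3))); first by ring.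
  by rewrite qe hq; ring.
by apply/eqP; rewrite -subr_eq0 W0.
Qed.

End Key.
Section Main.
Variables (N : nat) (A B : 'M[C]_N).
Hypotheses (hA : adjmx A = A) (hB : adjmx B = B) (AA : A *m A = A) (BB : B *m B = B).

Definition tt (X Y : 'M[C]_N) k := \tr (iter k (fun Z => Z *m (X *m Y)) 1%:M).

Lemma AAl p (X : 'M[C]_(p, N)) : X *m A *m A = X *m A.
Proof. by rewrite -mulmxA AA. Qed.
Lemma BBl p (X : 'M[C]_(p, N)) : X *m B *m B = X *m B.
Proof. by rewrite -mulmxA BB. Qed.

Lemma main_gen : \tr B = \tr A ->
  ((exists Q : R, 0 < Q /\
      ((Q ^+ 2)%:C)%C *: (A *m B *m A - B *m A *m B) = A - B) ->
   (\tr A - tt A B 1) * (tt A B 2 - tt A B 3) - (tt A B 1 - tt A B 2) ^+ 2 = 0)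
  /\
  ((\tr A - tt A B 1) * (tt A B 2 - tt A B 3) - (tt A B 1 - tt A B 2) ^+ 2 = 0 ->
   A *m B != B *m A ->
   exists Q : R, 0 < Q /\
       ((Q ^+ 2)%:C)%C = (\tr A - tt A B 1) / (tt A B 1 - tt A B 2) /\
       ((Q ^+ 2)%:C)%C *: (A *m B *m A - B *m A *m B) = A - B).
Proof.
move=> trAB.
have -> : tt A B 1 = \tr (A *m B) by rewrite /tt /= mul1mx.
have -> : tt A B 2 = \tr (A *m B *m (A *m B)) by rewrite /tt /= mul1mx.
have -> : tt A B 3 = \tr (A *m B *m (A *m B) *m (A *m B)) by rewrite /tt /= mul1mx.
set t1 := \tr (A *m B); set t2 := \tr (A *m B *m (A *m B)).
set t3 := \tr (A *m B *m (A *m B) *m (A *m B)).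
have w1 : \tr (A *m B *m A) = t1 by rewrite mxtrace_mulC mulmxA AA.
have w2 : \tr (A *m B *m A *m B) = t2 by rewrite /t2 !mulmxA.
have w2' : \tr (A *m B *m A *m B *m A) = t2 by rewrite mxtrace_mulC !mulmxA AA.
have w3 : \tr (A *m B *m A *m B *m A *m B) = t3 by rewrite /t3 !mulmxA.
split.
  case=> Q [_ H]; set q := ((Q ^+ 2)%:C)%C in H.
  have h1 := congr1 (fun X => \tr (A *m X)) H.
  have h2 := congr1 (fun X => \tr (A *m B *m A *m X)) H.
  rewrite /= -!scalemxAr !mxtraceZ !mulmxBr !raddfB /= !mulmxA ?AAl AA w1 w2 in h1.
  rewrite /= -!scalemxAr !mxtraceZ !mulmxBr !raddfB /= !mulmxA !AAl w1 w2 w2' w3 in h2.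
  rewrite -h1 -h2; ring.
move=> hF hnc.
set X := A *m B - A *m B *m A.
have hX : adjmx X = B *m A - A *m B *m A by rewrite /X adjmxB !adjmxM hA hB mulmxA.
have dE : \tr (X *m adjmx X) = t1 - t2.
  rewrite hX /X !mulmxBl !mulmxBr !raddfB /= !mulmxA ?AAl ?BBl w1 w2'; ring.
have d0 : t1 - t2 != 0.
  apply/eqP => d0; move: dE; rewrite d0 => /tr_adj_eq0 /eqP; rewrite subr_eq0 => /eqP e.
  move/negP: hnc; apply; apply/eqP.
  have := congr1 (@adjmx R N N) e; rewrite !adjmxM hA hB mulmxA => ->; exact: e.
have dpos : 0 < t1 - t2 by rewrite lt0r d0 -dE tr_adj_ge0.
set Y := A - B *m A.
have hY : adjmx Y = A - A *m B by rewrite /Y adjmxB !adjmxM hA hB.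
have wBAB : \tr (B *m A *m B) = t1 by rewrite mxtrace_mulC mulmxA BB mxtrace_mulC.
have uE : \tr (Y *m adjmx Y) = \tr A - t1.
  rewrite hY /Y !mulmxBl !mulmxBr !raddfB /= !mulmxA ?AAl AA wBAB.
  rewrite (mxtrace_mulC B A); ring.
have u0 : \tr A - t1 != 0.
  apply/eqP => u0; move: uE; rewrite u0 => /tr_adj_eq0 /eqP; rewrite subr_eq0 => /eqP e.
  move/negP: hnc; apply; apply/eqP.
  have e' := congr1 (@adjmx R N N) e; rewrite !adjmxM hA hB in e'.
  by rewrite -e' -e.
have upos : 0 < \tr A - t1 by rewrite lt0r u0 -uE tr_adj_ge0.
set q := (\tr A - t1) / (t1 - t2).
have qpos : 0 < q by rewrite divr_gt0.
have qE : q = (complex.Re q)%:C%C.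
  by rewrite [LHS]complexE (ger0_Im (ltW qpos)) mulr0 addr0.
have spos : 0 < complex.Re q by move: qpos; rewrite ltcE /= => /andP [].
exists (Num.sqrt (complex.Re q)); split; first by rewrite sqrtr_gt0.
rewrite sqr_sqrtr; last exact: ltW.
rewrite -qE; split; first by [].
have hF' : (\tr A - t1) * (t2 - t3) = (t1 - t2) ^+ 2 by apply/eqP; rewrite -subr_eq0 hF.
have hq : (complex.Re q)%:C%C * (t1 - t2) = \tr A - t1 by rewrite -qE /q divfK.
have K1 := key hA hB AA BB (erefl t1) (erefl t2) (erefl t3) hF' hq d0.
have t1' : \tr (B *m A) = t1 by rewrite mxtrace_mulC.
have t2' : \tr (B *m A *m (B *m A)) = t2 by rewrite !mulmxA mxtrace_mulC !mulmxA w2.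
have t3' : \tr (B *m A *m (B *m A) *m (B *m A)) = t3.
  by rewrite !mulmxA mxtrace_mulC !mulmxA w3.
rewrite -trAB in hF' hq.
have K2 := key hB hA BB AA t1' t2' t3' hF' hq d0.
have K1' := congr1 (@adjmx R N N) K1.
rewrite adjmxM !adjmxB !adjmxZ !adjmxM hA hB !mulmxA in K1'.
rewrite -qE in K1' K2.
have E : A - q *: (A *m B *m A) = B - q *: (B *m A *m B).
  by rewrite K1' K2 mulmxBl mulmxBr -scalemxAl -scalemxAr !mulmxA.
by rewrite scalerBr; apply: zl.
Qed.
End Main.

End Helpers.

Unset Implicit Arguments.

Theorem proposition1 (R : realType) (n : nat) (P : 'M[R[i]]_(n * n)) :
  (2 <= n)%N ->
  adjmx P = P -> P *m P = P ->
  (* (a) *)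
  ((exists Q : R, 0 < Q /\
      ((Q ^+ 2)%:C)%C *: (P1 P *m P2 P *m P1 P - P2 P *m P1 P *m P2 P) = P1 P - P2 P)
     -> FP P = 0)
  /\
  (* (b) *)
  (FP P = 0 -> P1 P *m P2 P != P2 P *m P1 P ->
     exists Q : R, 0 < Q /\
       ((Q ^+ 2)%:C)%C = ((\rank P * n)%:R - tm P 1) / (tm P 1 - tm P 2) /\
       ((Q ^+ 2)%:C)%C *: (P1 P *m P2 P *m P1 P - P2 P *m P1 P *m P2 P) = P1 P - P2 P).
Proof.
move=> _ hP PP.
have hA1 : adjmx (P1 P) = P1 P by rewrite /P1 adjmx_tens hP adjmx1.
have hB1 : adjmx (P2 P) = P2 P by rewrite /P2 adjmx_cast adjmx_tens adjmx1 hP.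
have AA : P1 P *m P1 P = P1 P by rewrite /P1 tensmx_mul PP mulmx1.
have BB : P2 P *m P2 P = P2 P by rewrite /P2 castmx_mulmx tensmx_mul mulmx1 PP.
have trA : \tr (P1 P) = (\rank P * n)%:R.
  by rewrite /P1 tr_tens (tr_idem PP) mxtrace1 natrM.
have trB : \tr (P2 P) = \tr (P1 P).
  by rewrite trA /P2 tr_cast tr_tens mxtrace1 (tr_idem PP) natrM mulrC.
have := main_gen hA1 hB1 AA BB trB.
by rewrite /FP -trA.
Qed.
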